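(* Let $\mathcal{N}$ be a 2-step nilpotent Lie algebra over $\mathbb{R}$ whose commutator ideal $\mathcal{Z}=[\mathcal{N},\mathcal{N}]$ coincides with its center, and let $\mathcal{V}$ be a subspace with $\mathcal{N}=\mathcal{V}\oplus\mathcal{Z}$. Let $q\ge2$ and assume there is an $\mathbb{R}$-basis $Y_1,\dots,Y_q$ of $\mathcal{V}$ such that $\{[Y_1,Y_j]: j=2,\dots,q\}$ is linearly independent. Let $f:\mathcal{N}\to\mathcal{N}$ be a Lie ring homomorphism with $f(\mathcal{V})\subseteq\mathcal{V}$. Then: (A) if $f$ is a Lie ring automorphism and $f(\mathcal{V})=\mathcal{V}$, then $f$ is a Lie algebra automorphism; (B) if there is an $\mathbb{R}$-basis $X_1,\dots,X_q$ of $\mathcal{V}$ with $f(X_1)=Y_1$ and $f([X_1,X_j])\neq0$ for all $j=2,\dots,q$, then $f$ is a Lie algebra homomorphism. In particular, $\mathcal{N}$ satisfies the partial automatic continuity, and for every Lie ring automorphism $f$ of $\mathcal{N}$ there exist a central automorphism $\mu$ and a Lie algebra automorphism $\overline{f}$ of $\mathcal{N}$ such that $f=\mu\circ\overline{f}$.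
   Context: A Lie ring homomorphism between real Lie algebras is an additive map preserving the Lie bracket (not assumed $\mathbb{R}$-linear); a Lie ring automorphism is a bijective Lie ring homomorphism of a Lie algebra onto itself. A Lie algebra homomorphism/automorphism is an $\mathbb{R}$-linear one. A central automorphism of a Lie algebra $\mathcal{N}$ with center $\mathfrak{z}$ is a Lie ring automorphism $f$ with $f(x)-x\in\mathfrak{z}$ for all $x$. Field automorphisms of $\mathcal{N}$: if $\mathcal{N}=\mathcal{N}_1\oplus\cdots\oplus\mathcal{N}_k$ (ideals), for each $\mathcal{N}_i$ that is the realification of a complex Lie algebra choose a $\mathbb{C}$-basis $e_1,\dots,e_m$ and a field automorphism $\varphi$ of $\mathbb{C}$ fixing the structure constants and set $\sigma_i(\sum x_le_l)=\sum\varphi(x_l)e_l$, otherwise $\sigma_i=\mathrm{id}$; $\sigma_1\times\cdots\times\sigma_k$ is a field automorphism. $\mathcal{N}$ satisfies the partial automatic continuity if every Lie ring automorphism is a composition $\mu\circ\overline{f}\circ\sigma$ of a central automorphism, a Lie algebra automorphism and a field automorphism. *)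

(* Defs.v *)
From HB Require Import structures.
From mathcomp Require Import all_boot all_order all_algebra.
From mathcomp Require Import reals.
From mathcomp.real_closed Require Import complex.
Set Implicit Arguments. Unset Strict Implicit. Unset Printing Implicit Defensive.
Import Order.TTheory GRing.Theory Num.Theory.
Local Open Scope ring_scope.

Section LieDefs.
Variables (R : realType) (L : vectType R) (br : L -> L -> L).

Definition lie_bracket : Prop :=
  [/\ (forall (a : R) x y z, br (a *: x + y) z = a *: br x z + br y z),
      (forall (a : R) x y z, br x (a *: y + z) = a *: br x y + br x z),
      (forall x, br x x = 0) &
      (forall x y z, br x (br y z) + br y (br z x) + br z (br x y) = 0)].

Definition two_step_nilpotent : Prop :=
  (forall x y z, br x (br y z) = 0) /\ exists x y, br x y != 0.

Definition is_center (Z : {vspace L}) : Prop :=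
  forall z, z \in Z <-> (forall x, br z x = 0).

Definition is_derived (Z : {vspace L}) : Prop :=
  (forall x y, br x y \in Z) /\
  (forall W : {vspace L}, (forall x y, br x y \in W) -> (Z <= W)%VS).

Definition lie_ring_hom (f : L -> L) : Prop :=
  (forall x y, f (x + y) = f x + f y) /\ (forall x y, f (br x y) = br (f x) (f y)).

Definition lie_ring_aut (f : L -> L) : Prop := lie_ring_hom f /\ bijective f.

Definition lie_alg_hom (f : L -> L) : Prop :=
  lie_ring_hom f /\ (forall (a : R) x, f (a *: x) = a *: f x).

Definition lie_alg_aut (f : L -> L) : Prop := lie_alg_hom f /\ bijective f.

Definition central_aut (f : L -> L) : Prop :=
  lie_ring_aut f /\ (forall x y, br (f x - x) y = 0).

(* J is a complex structure on the ideal W making W (with br) the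
   realification of a complex Lie algebra *)
Definition complex_structure (W : {vspace L}) (J : L -> L) : Prop :=
  [/\ (forall (a : R) x y, J (a *: x + y) = a *: J x + J y),
      (forall x, x \in W -> J x \in W),
      (forall x, x \in W -> J (J x) = - x) &
      (forall x y, x \in W -> y \in W -> br (J x) y = J (br x y))].

Definition cscale (J : L -> L) (z : R[i]) (x : L) : L := ((@complex.Re R z) *: x) + ((@complex.Im R z) *: J x).

Definition csum (J : L -> L) (m : nat) (c : 'I_m -> R[i]) (e : 'I_m -> L) : L :=
  \sum_(l < m) cscale J (c l) (e l).

Definition cbasis (W : {vspace L}) (J : L -> L) (m : nat) (e : 'I_m -> L) : Prop :=
  [/\ (forall l, e l \in W),
      (forall x, x \in W -> exists c : 'I_m -> R[i], x = csum J c e) &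
      (forall c c' : 'I_m -> R[i], csum J c e = csum J c' e -> forall l, c l = c' l)].

(* the admissible maps sigma_i on an ideal W: either the identity, or
   (W a realification) the map induced by a field automorphism phi of C
   fixing the structure constants w.r.t. a C-basis.  (For a realification,
   the identity is the case phi = id, so this matches the paper.) *)
Definition component_field_aut (W : {vspace L}) (s : L -> L) : Prop :=
  (forall x, x \in W -> s x = x) \/
  exists (J : L -> L) (m : nat) (e : 'I_m -> L) (phi : {rmorphism R[i] -> R[i]}),
    [/\ bijective phi, complex_structure W J, cbasis W J e,
        (forall (a b : 'I_m) (c : 'I_m -> R[i]),
            br (e a) (e b) = csum J c e -> forall l, phi (c l) = c l) &
        (forall c : 'I_m -> R[i], s (csum J c e) = csum J (fun l => phi (c l)) e)].

(* field automorphism of N: product of component maps along a direct-sum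
   decomposition of N into ideals *)
Definition field_aut (sigma : L -> L) : Prop :=
  exists (k : nat) (Ns : 'I_k -> {vspace L}),
    [/\ (forall i x y, y \in Ns i -> br x y \in Ns i),
        directv (\sum_(i < k) Ns i),
        (\sum_(i < k) Ns i)%VS = fullv &
        exists sig : 'I_k -> L -> L,
          (forall i, component_field_aut (Ns i) (sig i)) /\
          (forall x : 'I_k -> L, (forall i, x i \in Ns i) ->
             sigma (\sum_(i < k) x i) = \sum_(i < k) sig i (x i))].

Definition partial_automatic_continuity : Prop :=
  forall f, lie_ring_aut f ->
    exists (mu g sigma : L -> L),
      [/\ central_aut mu, lie_alg_aut g, field_aut sigma &
          f =1 mu \o g \o sigma].

End LieDefs.

(* Main.v *)
Require Import Defs.
From HB Require Import structures.
From mathcomp Require Import all_boot all_order all_algebra.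
From mathcomp Require Import reals.
From mathcomp.real_closed Require Import complex.
Import Order.TTheory GRing.Theory Num.Theory.
Local Open Scope ring_scope.

Section PhiId.
Variables (R : realType) (phi : R -> R).
Hypotheses (phiD : {morph phi : x y / x + y}) (phiM : {morph phi : x y / x * y}) (phi1 : phi 1 = 1).
Definition phif := phi.
Let phi0 : phi 0 = 0.
Proof. by apply/(addrI (phi 0)); rewrite -phiD !addr0. Qed.
HB.instance Definition _ := GRing.isNmodMorphism.Build R R phif (phi0, phiD).
HB.instance Definition _ := GRing.isMonoidMorphism.Build R R phif (phi1, phiM).
Let phi_ge0 x : 0 <= x -> 0 <= phif x.
Proof. by move=> x0; rewrite -(sqr_sqrtr x0) rmorphXn sqr_ge0. Qed.
Lemma phi_id_aux x : phi x = x.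
Proof.
have H : forall y z, y <= z -> phif y <= phif z.
  by move=> y z yz; rewrite -subr_ge0 -rmorphB phi_ge0 // subr_ge0.
case: (ltgtP (phif x) x) => //.
- move=> /rat_in_itvoo[r]; rewrite in_itv /= => /andP[h1 h2].
  have := H _ _ (ltW h2); rewrite fmorph_rat => h3.
  by move: (lt_le_trans h1 h3); rewrite ltxx.
- move=> /rat_in_itvoo[r]; rewrite in_itv /= => /andP[h1 h2].
  have := H _ _ (ltW h1); rewrite fmorph_rat => h3.
  by move: (lt_le_trans h2 h3); rewrite ltxx.
Qed.
End PhiId.

Lemma scal_cancel {R : fieldType} {L : lmodType R} {a b : R} {v : L} :
  v != 0 -> a *: v = b *: v -> a = b.
Proof.
move=> v0 /eqP; rewrite -subr_eq0 -scalerBl scaler_eq0 (negPf v0) orbF subr_eq0.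
by move/eqP.
Qed.

Section Lie.
Variables (R : realType) (L : vectType R) (br : L -> L -> L).
Hypothesis Hbr : lie_bracket br.

Lemma brDl x y z : br (x + y) z = br x z + br y z.
Proof. by case: Hbr => H _ _ _; have := H 1 x y z; rewrite !scale1r. Qed.
Lemma brDr x y z : br x (y + z) = br x y + br x z.
Proof. by case: Hbr => _ H _ _; have := H 1 x y z; rewrite !scale1r. Qed.
Lemma br0l z : br 0 z = 0.
Proof. by apply/(addrI (br 0 z)); rewrite -brDl !addr0. Qed.
Lemma br0r z : br z 0 = 0.
Proof. by apply/(addrI (br z 0)); rewrite -brDr !addr0. Qed.
Lemma brZl a x z : br (a *: x) z = a *: br x z.
Proof. by case: Hbr => H _ _ _; have := H a x 0 z; rewrite !addr0 br0l addr0. Qed.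
Lemma brZr a x z : br z (a *: x) = a *: br z x.
Proof. by case: Hbr => _ H _ _; have := H a z x 0; rewrite !addr0 br0r addr0. Qed.
Lemma brxx x : br x x = 0.
Proof. by case: Hbr. Qed.
Lemma brNl x z : br (- x) z = - br x z.
Proof. by rewrite -scaleN1r brZl scaleN1r. Qed.
Lemma brNr x z : br z (- x) = - br z x.
Proof. by rewrite -scaleN1r brZr scaleN1r. Qed.
Lemma brBl x y z : br (x - y) z = br x z - br y z.
Proof. by rewrite brDl brNl. Qed.
Lemma brBr x y z : br z (x - y) = br z x - br z y.
Proof. by rewrite brDr brNr. Qed.
Lemma br_anti x y : br x y = - br y x.
Proof.
have := brxx (x + y); rewrite !brDl !brDr !brxx add0r addr0 => /eqP.
by rewrite addr_eq0 => /eqP.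
Qed.
Lemma brsumr x I r P (F : I -> L) :
  br x (\sum_(i <- r | P i) F i) = \sum_(i <- r | P i) br x (F i).
Proof. exact: (big_morph (br x) (brDr x) (br0r x)). Qed.
Lemma brsuml x I r P (F : I -> L) :
  br (\sum_(i <- r | P i) F i) x = \sum_(i <- r | P i) br (F i) x.
Proof. exact: (big_morph (br^~ x) (fun a b => brDl a b x) (br0l x)). Qed.

Section Add.
Variable f : L -> L.
Hypothesis fD : forall x y, f (x + y) = f x + f y.
Lemma f0 : f 0 = 0.
Proof. by apply/(addrI (f 0)); rewrite -fD !addr0. Qed.
Lemma fN x : f (- x) = - f x.
Proof. by apply/(addrI (f x)); rewrite -fD !subrr f0. Qed.
Lemma fB x y : f (x - y) = f x - f y.
Proof. by rewrite fD fN. Qed.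
Lemma fsum I r P (F : I -> L) :
  f (\sum_(i <- r | P i) F i) = \sum_(i <- r | P i) f (F i).
Proof. exact: (big_morph f fD f0). Qed.
End Add.

Lemma brackets_span (Z : {vspace L}) (P : L -> Prop) : is_derived br Z -> P 0 ->
  (forall x y, P x -> P y -> P (x + y)) -> (forall a x, P x -> P (a *: x)) ->
  (forall x y, P (br x y)) -> forall z, z \in Z -> P z.
Proof.
move=> [_ HZ] P0 PD PZ Pbr z zZ.
pose b := vbasis (fullv : {vspace L}).
pose s := [seq br x y | x <- (b : seq L), y <- (b : seq L)].
have spb : <<b>>%VS = fullv.
  by have := vbasisP (fullv : {vspace L}); rewrite /basis_of => /andP[/eqP].
have Hs : forall x y, br x y \in <<s>>%VS.
  move=> x y.
  have -> : x = \sum_i coord b i x *: b`_i by apply: coord_span; rewrite spb memvf.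
  have -> : y = \sum_i coord b i y *: b`_i by apply: coord_span; rewrite spb memvf.
  rewrite brsuml; apply: memv_suml => i _; rewrite brZl brsumr memvZ //.
  apply: memv_suml => j _; rewrite brZr memvZ // memv_span //.
  by apply: allpairs_f; apply: mem_nth; rewrite size_tuple.
have wS := subvP (HZ _ Hs) z zZ.
rewrite (coord_span (X := in_tuple s) wS).
elim/big_ind: _ => //= i _; apply: PZ.
have : (in_tuple s)`_i \in s by apply: mem_nth; rewrite /= ltn_ord.
by case/allpairsP => [[x y] [_ _ ->]].
Qed.

Lemma kerK (V : {vspace L}) n (Y : n.+2.-tuple L) :
  basis_of V Y -> free [seq br Y`_0 Y`_j | j <- iota 1 n.+1] ->
  forall v, v \in V -> br Y`_0 v = 0 -> v = coord Y ord0 v *: Y`_0.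
Proof.
move=> /andP[/eqP spY _] fr v vV H0.
have vs : v \in <<Y>>%VS by rewrite spY.
have E := coord_span vs.
pose T := [tuple br Y`_0 Y`_(lift ord0 i) | i < n.+1].
have TE : (T : seq L) = [seq br Y`_0 Y`_j | j <- iota 1 n.+1].
  apply: (@eq_from_nth _ 0); first by rewrite size_tuple size_map size_iota.
  move=> i; rewrite size_tuple => Hi.
  rewrite (nth_map 0%N) ?size_iota // nth_iota //.
  have -> : T`_i = T`_(Ordinal Hi) by [].
  by rewrite nth_mktuple.
have frT : free T by rewrite TE.
have /freeP Hk0 := frT.
have Hk := Hk0 (fun i => coord Y (lift ord0 i) v).
have Z0 : forall i : 'I_n.+1, coord Y (lift ord0 i) v = 0.
  apply: Hk.
  transitivity (br Y`_0 v); last exact: H0.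
  rewrite [in RHS]E brsumr [in RHS]big_ord_recl brZr brxx scaler0 add0r.
  by apply: eq_bigr => i _; rewrite brZr nth_mktuple.
rewrite {1}E big_ord_recl big1 ?addr0 // => i _; by rewrite Z0 scale0r.
Qed.

Lemma core (V Z : {vspace L}) (f : L -> L) (Y0 X0 u : L) (c0 : L -> R) :
  is_center br Z -> is_derived br Z -> (V + Z)%VS = fullv ->
  lie_ring_hom br f -> (forall v, v \in V -> f v \in V) ->
  (forall v, v \in V -> br Y0 v = 0 -> v = c0 v *: Y0) ->
  X0 \in V -> f X0 = Y0 -> u \in V -> f (br X0 u) != 0 ->
  forall t x, f (t *: x) = t *: f x.
Proof.
move=> HC HD HVZ [fD fbr] fV HK X0V fX0 uV fu.
have fbrY : forall w, f (br X0 w) = br Y0 (f w) by move=> w; rewrite fbr fX0.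
have Y0n : Y0 != 0.
  by apply: contra fu => /eqP Y0e; rewrite fbrY Y0e br0l.
pose phi t := c0 (f (t *: X0)).
have S1 : forall t, f (t *: X0) = phi t *: Y0.
  move=> t; apply: HK; first by apply: fV; rewrite memvZ.
  by rewrite -fX0 -fbr brZr brxx scaler0 (f0 _ fD).
have S2 : forall w, w \in V -> f (br X0 w) != 0 -> forall t, f (t *: w) = phi t *: f w.
  move=> w wV fw t.
  pose g := f (t *: w) - phi t *: f w.
  have gV : g \in V by rewrite memvB ?memvZ ?fV ?memvZ.
  have g0 : br Y0 g = 0.
    have E1 : br Y0 (f (t *: w)) = phi t *: br Y0 (f w).
      by rewrite -fbrY brZr -brZl fbr S1 brZl.
    by rewrite brBr brZr E1 subrr.
  have Eg := HK g gV g0.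
  have : f (br (t *: w) w) = 0 by rewrite brZl brxx scaler0 (f0 _ fD).
  rewrite fbr.
  have -> : f (t *: w) = phi t *: f w + c0 g *: Y0 by rewrite -Eg /g addrC subrK.
  rewrite brDl !brZl brxx scaler0 add0r -fbrY => /eqP.
  rewrite scaler_eq0 (negPf fw) orbF => /eqP cg.
  by rewrite cg scale0r addr0.
have S3 : forall w, w \in V -> forall t, f (t *: w) = phi t *: f w.
  move=> w wV t; have [fw0|fw] := eqVneq (f (br X0 w)) 0; last by apply: S2.
  have H1 : f (br X0 (w + u)) != 0 by rewrite brDr fD fw0 add0r.
  have := S2 _ (memvD wV uV) H1 t; rewrite scalerDr !fD (S2 u uV fu) scalerDr.
  by move/addIr.
have phiM : forall s t, phi (s * t) = phi s * phi t.
  move=> s t.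
  have E : br (s *: X0) (t *: u) = br ((s * t) *: X0) u.
    by rewrite !brZl brZr scalerA.
  have := congr1 f E; rewrite !fbr !S1 S3 // brZl brZr scalerA brZl -fbrY.
  by move/(scal_cancel fu)->.
have phiD : forall s t, phi (s + t) = phi s + phi t.
  move=> s t; apply: (scal_cancel Y0n); rewrite scalerDl -!S1 -fD scalerDl.
  by [].
have phi1 : phi 1 = 1 by apply: (scal_cancel Y0n); rewrite -S1 !scale1r.
have phiE := @phi_id_aux _ phi phiD phiM phi1.
have S5 : forall w, w \in V -> forall t, f (t *: w) = t *: f w.
  by move=> w wV t; rewrite S3 // phiE.
have S6 : forall x y t, f (t *: br x y) = t *: f (br x y).
  move=> x y t.
  have /memv_addP[v vV [z zZ ->]] : x \in (V + Z)%VS by rewrite HVZ memvf.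
  have zc : br z y = 0 by apply: (HC z).1.
  by rewrite brDl zc addr0 -brZl !fbr S5 // brZl.
have S7 : forall z, z \in Z -> forall t, f (t *: z) = t *: f z.
  apply: (@brackets_span Z (fun z => forall t, f (t *: z) = t *: f z) HD).
  - by move=> t; rewrite scaler0 (f0 _ fD) scaler0.
  - by move=> x y Hx Hy t; rewrite scalerDr !fD Hx Hy scalerDr.
  - by move=> a x Hx t; rewrite scalerA !Hx scalerA.
  - by move=> x y t; apply: S6.
move=> t x.
have /memv_addP[v vV [z zZ ->]] : x \in (V + Z)%VS by rewrite HVZ memvf.
by rewrite scalerDr !fD S5 // S7 // scalerDr.
Qed.

Lemma inv_hom f g : lie_ring_hom br f -> cancel f g -> cancel g f -> lie_ring_hom br g.
Proof.
move=> [fD fbr] fg gf; split=> x y; apply: (can_inj fg).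
  by rewrite fD !gf.
by rewrite fbr !gf.
Qed.

Lemma inj_surj_bij (g : L -> L) : injective g -> (forall y, exists x, g x = y) -> bijective g.
Proof.
move=> gi gs.
have gs' : forall y, exists x, g x == y by move=> y; case: (gs y) => x <-; exists x.
exists (fun y => xchoose (gs' y)).
  by move=> x; apply: gi; apply/eqP; exact: (xchooseP (gs' (g x))).
by move=> y; apply/eqP; exact: (xchooseP (gs' y)).
Qed.

Lemma basis_mem (V : {vspace L}) m (Y : m.-tuple L) i :
  basis_of V Y -> (i < m)%N -> Y`_i \in V.
Proof.
move=> /andP[/eqP spY _] im; by rewrite -spY memv_span // mem_nth // size_tuple.
Qed.

Lemma partA (V Z : {vspace L}) n (Y : n.+2.-tuple L) :
  is_center br Z -> is_derived br Z -> (V + Z)%VS = fullv ->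
  basis_of V Y -> free [seq br Y`_0 Y`_j | j <- iota 1 n.+1] ->
  forall f, lie_ring_hom br f -> (forall v, v \in V -> f v \in V) ->
  lie_ring_aut br f -> (forall v, v \in V -> exists2 w, w \in V & f w = v) ->
  lie_alg_aut br f.
Proof.
move=> HC HD HVZ bY fr f fh fV [_ fb] fs; split=> //; split=> //.
have [X0 X0V fX0] := fs _ (@basis_mem V _ Y 0 bY isT).
have [u uV fu] := fs _ (@basis_mem V _ Y 1 bY isT).
apply: (@core V Z f Y`_0 X0 u (coord Y ord0) HC HD HVZ fh fV (@kerK V n Y bY fr) X0V fX0 uV).
rewrite (proj2 fh) fX0 fu; apply: (@free_not0 _ _ _ _ fr).
by apply/mapP; exists 1%N.
Qed.

Lemma decomp (V Z : {vspace L}) n (Y : n.+2.-tuple L) :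
  is_center br Z -> is_derived br Z -> (V + Z)%VS = fullv -> (V :&: Z)%VS = 0%VS ->
  basis_of V Y -> free [seq br Y`_0 Y`_j | j <- iota 1 n.+1] ->
  forall f : L -> L, lie_ring_aut br f ->
     exists mu g : L -> L, [/\ central_aut br mu, lie_alg_aut br g & f =1 mu \o g].
Proof.
move=> HC HD HVZ HVZ0 bY fr f [[fD fbr] fb].
have fh : lie_ring_hom br f by [].
case: (fb) => finv fK fKi.
have [fiD fibr] := @inv_hom f finv fh fK fKi.
pose pV := daddv_pi V Z; pose pZ := daddv_pi Z V.
have HZV0 : (Z :&: V = 0)%VS by rewrite capvC.
have pVD : forall a b, pV (a + b) = pV a + pV b by move=> a b; exact: raddfD.
have pZD : forall a b, pZ (a + b) = pZ a + pZ b by move=> a b; exact: raddfD.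
have pVB : forall a b, pV (a - b) = pV a - pV b by move=> a b; exact: raddfB.
have pV0 : pV 0 = 0 by exact: raddf0.
have pdec : forall x, pV x + pZ x = x.
  by move=> x; apply: daddv_pi_add => //; rewrite HVZ memvf.
have pVV : forall x, pV x \in V by move=> x; apply: memv_pi.
have pZZ : forall x, pZ x \in Z by move=> x; apply: memv_pi.
have pVv : forall v, v \in V -> pV v = v by move=> v; apply: daddv_pi_id.
have pZz : forall z, z \in Z -> pZ z = z by move=> z; apply: daddv_pi_id.
have pVz : forall z, z \in Z -> pV z = 0.
  by move=> z zZ; have := pdec z; rewrite pZz // => /(canRL (addrK z)); rewrite subrr.
have pZv : forall z, z \in V -> pZ z = 0.
  by move=> z zZ; have := pdec z; rewrite pVv // => /(canRL (addKr z)); rewrite addNr.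
have cen : forall z y, z \in Z -> br z y = 0 by move=> z y zZ; apply: (HC z).1.
have brc : forall a b z z', z \in Z -> z' \in Z -> br (a + z) (b + z') = br a b.
  move=> a b z z' zZ z'Z.
  by rewrite brDl !brDr (br_anti a z') !(cen z') // !(cen z) // oppr0 !addr0.
have brp : forall a b, br a b = br (pV a) (pV b).
  by move=> a b; rewrite -{1}(pdec a) -{1}(pdec b) brc.
have fZ : forall z, z \in Z -> f z \in Z.
  move=> z zZ; apply/HC => y; rewrite -(fKi y) -fbr cen //.
  exact: (f0 _ fD).
have fiZ : forall z, z \in Z -> finv z \in Z.
  move=> z zZ; apply/HC => y; rewrite -(fK y) -fibr cen //.
  exact: (f0 _ fiD).
pose g x := pV (f (pV x)) + f (pZ x).
have gD : forall x y, g (x + y) = g x + g y.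
  by move=> x y; rewrite /g pVD pZD !fD pVD addrACA.
have pVg : forall x, pV (g x) = pV (f (pV x)).
  by move=> x; rewrite /g pVD (pVz (f (pZ x))) ?fZ // addr0 daddv_pi_proj.
have gbr : forall x y, g (br x y) = br (g x) (g y).
  move=> x y; have bZ : br x y \in Z := HD.1 x y.
  rewrite /g (pVz _ bZ) (pZz _ bZ) (f0 _ fD) pV0 add0r.
  by rewrite [in RHS]brp !pVg -brp -fbr -brp.
have gh : lie_ring_hom br g by [].
have gV : forall v, v \in V -> g v \in V.
  by move=> v vV; rewrite /g pZv // (f0 _ fD) addr0.
have gsV : forall w, w \in V -> exists2 v, v \in V & g v = w.
  move=> w wV; exists (pV (finv w)) => //.
  rewrite /g pZv // (f0 _ fD) addr0 daddv_pi_proj //.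
  have E : f (pV (finv w)) = w - f (pZ (finv w)).
    by apply/eqP; rewrite eq_sym subr_eq -fD pdec fKi.
  by rewrite E pVB (pVv w wV) (pVz _ (fZ _ (pZZ _))) subr0.
have gsurj : forall y, exists x, g x = y.
  move=> y; have [v vV gv] := gsV _ (pVV y).
  exists (v + finv (pZ y)); rewrite gD gv.
  have zZ := fiZ _ (pZZ y).
  by rewrite /g (pVz _ zZ) (pZz _ zZ) (f0 _ fD) pV0 add0r fKi pdec.
have ginj : injective g.
  move=> x x' E; apply/eqP; rewrite -subr_eq0; set d := x - x'.
  have gd0 : g d = 0 by rewrite /d (fB _ gD) E subrr.
  have A0 : pV (f (pV d)) = 0.
    have : pV (f (pV d)) \in (V :&: Z)%VS.
      rewrite memv_cap pVV /=.
      move: gd0; rewrite /g => /eqP; rewrite addr_eq0 => /eqP ->.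
      by rewrite memvN fZ.
    by rewrite HVZ0 memv0 => /eqP.
  have B0 : pZ d = 0.
    apply: (can_inj fK); rewrite (f0 _ fD).
    by move: gd0; rewrite /g A0 add0r.
  have C0 : pV d = 0.
    have : pV d \in (V :&: Z)%VS.
      rewrite memv_cap pVV /= -(fK (pV d)) fiZ //.
      by rewrite -(pdec (f (pV d))) A0 add0r.
    by rewrite HVZ0 memv0 => /eqP.
  by rewrite -(pdec d) B0 C0 addr0.
have gbij := @inj_surj_bij g ginj gsurj.
have ga := @partA V Z n Y HC HD HVZ bY fr g gh gV (conj gh gbij) gsV.
case: (gbij) => ginv gK gKi.
have [giD gibr] := @inv_hom g ginv gh gK gKi.
exists (f \o ginv), g; split=> //.
- split; last first.
    move=> x y; set a := ginv x; rewrite -{2}(gKi x) -/a.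
    have -> : f a - g a = pZ (f (pV a)).
      have ha : f a = f (pV a) + f (pZ a) by rewrite -fD pdec.
      rewrite /g ha; set A := f (pV a); apply/eqP; rewrite subr_eq -{1}(pdec A).
      by rewrite addrA [pZ A + _]addrC.
    exact: cen.
  split; last exact: (bij_comp fb (Bijective gKi gK)).
  by split=> x y /=; rewrite ?giD ?gibr ?fD ?fbr.
- by move=> x /=; rewrite gK.
Qed.
End Lie.

Theorem lemma3p1 (R : realType) (L : vectType R) (br : L -> L -> L)
  (V Z : {vspace L}) (q : nat) (Y : q.-tuple L) :
  lie_bracket br -> two_step_nilpotent br ->
  is_derived br Z -> is_center br Z ->
  (V + Z)%VS = fullv -> (V :&: Z)%VS = 0%VS ->
  (2 <= q)%N -> basis_of V Y ->
  free [seq br Y`_0 Y`_j | j <- iota 1 q.-1] ->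
  (forall f : L -> L, lie_ring_hom br f -> (forall v, v \in V -> f v \in V) ->
     (* (A) *)
     (lie_ring_aut br f -> (forall v, v \in V -> exists2 w, w \in V & f w = v) ->
        lie_alg_aut br f) /\
     (* (B) *)
     (forall X : q.-tuple L, basis_of V X -> f X`_0 = Y`_0 ->
        (forall j, (1 <= j < q)%N -> f (br X`_0 X`_j) != 0) ->
        lie_alg_hom br f)) /\
  partial_automatic_continuity br /\
  (forall f : L -> L, lie_ring_aut br f ->
     exists mu g : L -> L, [/\ central_aut br mu, lie_alg_aut br g & f =1 mu \o g]).
Proof.
move=> Hbr _ HD HC HVZ HVZ0.
case: q Y => [|[|n]] Y // _ bY fr.
have Hdec := @decomp R L br Hbr V Z n Y HC HD HVZ HVZ0 bY fr.
split; last split.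
- move=> f fh fV; split; first exact: (@partA R L br Hbr V Z n Y HC HD HVZ bY fr f fh fV).
  move=> X bX fX0 fXj; split=> //.
  apply: (@core R L br Hbr V Z f Y`_0 X`_0 X`_1 (coord Y ord0) HC HD HVZ fh fV
            (@kerK R L br Hbr V n Y bY fr)).
  + exact: (@basis_mem R L V _ X 0 bX isT).
  + exact: fX0.
  + exact: (@basis_mem R L V _ X 1 bX isT).
  + exact: fXj.
- move=> f fa; have [mu [g [Hmu Hg Hf]]] := Hdec f fa.
  exists mu, g, id; split=> //.
  exists 1%N, (fun _ => fullv); split.
  + by move=> i x y _; rewrite memvf.
  + by rewrite directvE /= !big_ord1.
  + by rewrite big_ord1.
  + exists (fun _ => id); split; first by move=> i; left.
    by [].
- exact: Hdec.
Qed.
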